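(* Every $\mathcal{TPTG}$-regular Lawson paratopological group is a topological group, where $\mathcal{TPTG}$ denotes the class of topologically periodic topological groups.
   Context: All topological spaces are Hausdorff. A paratopological group is a group with a Hausdorff topology making multiplication continuous; a topological group additionally has continuous inversion. A paratopological group is Lawson if it has a neighborhood base at the unit consisting of subsemigroups. A paratopological group $G$ is topologically periodic if for every $x\in G$ and every neighborhood $U$ of the unit there is $n\ge1$ with $x^n\in U$. A continuous map $h:X\to Y$ is regular if for each $x\in X$ and neighborhood $U$ of $x$ there is a closed $F\subset Y$ such that $h^{-1}(F)$ is a closed neighborhood of $x$ contained in $U$. For a class $\mathcal G$ of topological groups, a paratopological group is $\mathcal G$-regular if it admits a regular continuous homomorphism onto a topological group belonging to $\mathcal G$. *)

(* Defs.v *)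
From HB Require Import structures.
From mathcomp Require Import all_boot all_order.
From mathcomp Require Import all_classical topology.
Set Implicit Arguments. Unset Strict Implicit. Unset Printing Implicit Defensive.
Local Open Scope classical_set_scope.

Definition group_axioms (T : Type) (mul : T -> T -> T) (inv : T -> T) (e : T) :=
  [/\ forall x y z, mul x (mul y z) = mul (mul x y) z,
      forall x, mul e x = x, forall x, mul x e = x,
      forall x, mul (inv x) x = e & forall x, mul x (inv x) = e].

Definition paratopological_group (T : topologicalType)
  (mul : T -> T -> T) (inv : T -> T) (e : T) : Prop :=
  [/\ group_axioms mul inv e, hausdorff_space T &
      continuous (fun p : T * T => mul p.1 p.2)].

Definition topological_group (T : topologicalType)
  (mul : T -> T -> T) (inv : T -> T) (e : T) : Prop :=
  paratopological_group mul inv e /\ continuous inv.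

Definition lawson (T : topologicalType) (mul : T -> T -> T) (e : T) : Prop :=
  forall U, nbhs e U -> exists V : set T,
    [/\ nbhs e V, V `<=` U & forall a b, V a -> V b -> V (mul a b)].

Definition gpow (T : Type) (mul : T -> T -> T) (e : T) (x : T) (n : nat) : T :=
  iter n (mul x) e.

Definition topologically_periodic (T : topologicalType)
  (mul : T -> T -> T) (e : T) : Prop :=
  forall (x : T) (U : set T), nbhs e U -> exists n : nat, (1 <= n)%N /\ U (gpow mul e x n).

Definition regular_map (X Y : topologicalType) (h : X -> Y) : Prop :=
  continuous h /\
  forall (x : X) (U : set X), nbhs x U -> exists F : set Y,
    [/\ closed F, closed (h @^-1` F), nbhs x (h @^-1` F) & h @^-1` F `<=` U].

Definition TPTG_regular (G : topologicalType)
  (mul : G -> G -> G) (inv : G -> G) (e : G) : Prop :=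
  exists (H : topologicalType) (mulH : H -> H -> H) (invH : H -> H) (eH : H)
         (h : G -> H),
    [/\ topological_group mulH invH eH,
        topologically_periodic mulH eH,
        forall x y, h (mul x y) = mulH (h x) (h y),
        (forall y : H, exists x : G, h x = y) & regular_map h].

(* Main.v *)
Require Import Defs.
From mathcomp Require Import all_boot all_order.
From mathcomp Require Import all_classical topology.
Local Open Scope classical_set_scope.
Lemma contl (G : topologicalType) (mul : G -> G -> G) :
  continuous (fun p : G * G => mul p.1 p.2) -> forall a, continuous (mul a).
Proof.
move=> hc a z.
have := @continuous_comp _ _ _ (fun z : G => (a, z)) (fun p : G * G => mul p.1 p.2) z.
apply => //; last exact: hc.
apply: cvg_pair => //; exact: cvg_cst.
Qed.
Lemma contr (G : topologicalType) (mul : G -> G -> G) :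
  continuous (fun p : G * G => mul p.1 p.2) -> forall a, continuous (mul^~ a).
Proof.
move=> hc a z.
have := @continuous_comp _ _ _ (fun z : G => (z, a)) (fun p : G * G => mul p.1 p.2) z.
apply => //; last exact: hc.
apply: cvg_pair => //; exact: cvg_cst.
Qed.
Arguments contl {G mul}.
Arguments contr {G mul}.
Lemma pre (X Y : topologicalType) (f : X -> Y) x U :
  {for x, continuous f} -> nbhs (f x) U -> nbhs x (f @^-1` U).
Proof. by move=> hf hU; apply: hf. Qed.

Section Grp.
Variables (T : Type) (mul : T -> T -> T) (inv : T -> T) (e : T).
Hypothesis hg : group_axioms mul inv e.
Lemma inv_uniq a b : mul a b = e -> inv a = b.
Proof.
case: hg => A L R Vl Vr h.
by rewrite -[inv a]R -h A Vl L.
Qed.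
Lemma invM a b : inv (mul a b) = mul (inv b) (inv a).
Proof.
case: hg => A L R Vl Vr.
apply: inv_uniq; by rewrite -A (A b) Vr L Vr.
Qed.
Lemma invK a : inv (inv a) = a.
Proof. case: hg => A L R Vl Vr; apply: inv_uniq; exact: Vl. Qed.
Lemma gpowS x n : gpow mul e x n.+1 = mul (gpow mul e x n) x.
Proof.
case: hg => A L R Vl Vr.
elim: n => [|n IH] /=; first by rewrite /gpow /= L R.
by rewrite /gpow /= -A; congr (mul x); exact: IH.
Qed.
End Grp.
Arguments inv_uniq {T mul inv e}.
Arguments invM {T mul inv e}.
Arguments invK {T mul inv e}.
Arguments gpowS {T mul inv e}.

Theorem proposition4 (G : topologicalType) (mul : G -> G -> G) (inv : G -> G) (e : G) :
  paratopological_group mul inv e -> lawson mul e -> TPTG_regular mul inv e ->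
  topological_group mul inv e.
Proof.
move=> hp hl [H [mulH [invH [eH [h [[[hgH _ hcH] hiH] hper hmor hsurj [hhc hreg]]]]]]].
split => //.
case: hp => hg _ hc.
have hgH' := hgH.
case: hg => A L R Vl Vr.
case: hgH' => AH LH RH VlH VrH.
have he : h e = eH.
  have : mulH (h e) (h e) = h e by rewrite -hmor L.
  move=> E; by rewrite -[h e]LH -(VlH (h e)) -AH E.
have hinv x : h (inv x) = invH (h x).
  symmetry; apply: (inv_uniq hgH); by rewrite -hmor Vr.
have hpow x n : h (gpow mul e x n) = gpow mulH eH (h x) n.
  elim: n => [|n IH] //=; by rewrite /gpow /= hmor; congr (mulH _); exact: IH.
have inv0 : forall U, nbhs e U -> nbhs e (inv @^-1` U).
  move=> U hU.
  have [F [cF _ nF sF]] := hreg e U hU.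
  have [V [nV sV mV]] := hl _ nF.
  have nV0 := nV.
  apply: filterS nV => x Vx /=.
  apply: sF => /=; rewrite hinv.
  apply: cF => N hN.
  set y := h x.
  pose S := (mulH^~ (invH y)) @^-1` N.
  have nS : nbhs eH S.
    apply: (@pre _ _ (mulH^~ (invH y)) eH N (contr hcH (invH y) eH)); by rewrite /= LH.
  have [n [n1 Sn]] := hper y S nS.
  case: n n1 Sn => // m _; rewrite /S /y /preimage (gpowS hgH (h x)) /= -AH VrH RH => Nm.
  exists (gpow mulH eH y m); split => //.
  have Vm : V (gpow mul e x m).
    case: m {Nm} => [|m]; first exact: nbhs_singleton nV0.
    elim: m => [|m IH]; first by rewrite /gpow /= R.
    rewrite (gpowS (And5 A L R Vl Vr)); exact: mV.
  rewrite /y -hpow; exact: sV.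
move=> x U hU.
pose U1 := (mul (inv x)) @^-1` U.
have nU1 : nbhs e U1.
  apply: (@pre _ _ (mul (inv x)) e U (contl hc (inv x) e)); by rewrite /= R.
have nW := inv0 _ nU1.
have : nbhs x ((mul^~ (inv x)) @^-1` (inv @^-1` U1)).
  apply: (@pre _ _ (mul^~ (inv x)) x _ (contr hc (inv x) x)); by rewrite /= Vr.
apply: filterS => y /=.
have hg : group_axioms mul inv e by [].
by rewrite /U1 /= (invM hg) (invK hg) A Vl L.
Qed.
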